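(* Let $(x_k)$ be a bounded sequence in a Banach space $X$. Then $\operatorname{cca}(x_k)\le\operatorname{ca}(x_k)$.
   Context: For a bounded sequence $(x_k)$: $\operatorname{ca}(x_k)=\inf_{n\in\mathbb N}\sup\{\|x_k-x_l\|: k,l\ge n\}$, and $\operatorname{cca}(x_k)=\operatorname{ca}(y_k)$ where $y_k=\frac1k\sum_{i=1}^k x_i$. *)

(* Defs.v *)
From HB Require Import structures.
From mathcomp Require Import all_boot all_order all_algebra.
From mathcomp Require Import all_classical all_reals all_analysis.
Set Implicit Arguments. Unset Strict Implicit. Unset Printing Implicit Defensive.
Import Order.TTheory GRing.Theory Num.Theory.
Import numFieldNormedType.Exports.
Local Open Scope classical_set_scope.
Local Open Scope ring_scope.

(* Sequences are indexed by nat starting at 0 (paper: starting at 1). *)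

Definition ca {R : realType} {X : normedModType R} (x : nat -> X) : \bar R :=
  ereal_inf [set ereal_sup [set (`|x kl.1 - x kl.2|)%:E
                            | kl in [set kl : nat * nat | (n <= kl.1)%N /\ (n <= kl.2)%N]]
             | n in [set: nat]].

Definition cesaro {R : realType} {X : normedModType R} (x : nat -> X) : nat -> X :=
  fun k => (k.+1%:R)^-1 *: \sum_(i < k.+1) x i.

Definition cca {R : realType} {X : normedModType R} (x : nat -> X) : \bar R :=
  ca (cesaro x).

(* Main.v *)
Require Import Defs.
From HB Require Import structures.
From mathcomp Require Import all_boot all_order all_algebra.
From mathcomp Require Import all_classical all_reals all_analysis.
From mathcomp Require Import zify ring lra.
Import Order.TTheory GRing.Theory Num.Theory.
Import numFieldNormedType.Exports.
Local Open Scope classical_set_scope.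
Local Open Scope ring_scope.

Lemma cnt_le (R : realType) (N n : nat) :
  \sum_(i < n) ((i < N)%N%:R : R) <= N%:R.
Proof.
suff -> : \sum_(i < n) ((i < N)%N%:R : R) = (minn n N)%:R.
  by rewrite ler_nat geq_minr.
elim: n => [|n IH]; first by rewrite big_ord0 min0n.
rewrite big_ord_recr /= IH -natrD; congr (_%:R).
case: (ltnP n N) => h /=; lia.
Qed.

Lemma cesaro_diff (R : realType) (X : normedModType R) (x : nat -> X) (k l : nat) :
  (Defs.cesaro x k - Defs.cesaro x l) =
  (k.+1%:R * l.+1%:R)^-1 *: \sum_(i < k.+1) \sum_(j < l.+1) (x i - x j).
Proof.
have -> : \sum_(i < k.+1) \sum_(j < l.+1) (x i - x j) =
   l.+1%:R *: \sum_(i < k.+1) x i - k.+1%:R *: \sum_(j < l.+1) x j.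
  under eq_bigr => i _ do rewrite sumrB sumr_const card_ord.
  by rewrite sumrB sumr_const card_ord !scaler_nat sumrMnl.
rewrite scalerBr !scalerA /Defs.cesaro.
have hk : (k.+1%:R : R) != 0 by rewrite pnatr_eq0.
have hl : (l.+1%:R : R) != 0 by rewrite pnatr_eq0.
congr (_ *: _ - _ *: _); rewrite invfM.
  by rewrite -mulrA mulVf // mulr1.
by rewrite mulrAC mulVf // mul1r.
Qed.

Lemma key (R : realType) (X : normedModType R) (x : nat -> X) (M r : R) (N k l : nat) :
  (forall i, `|x i| <= M) -> 0 <= r ->
  (forall i j, (N <= i)%N -> (N <= j)%N -> `|x i - x j| <= r) ->
  `|Defs.cesaro x k - Defs.cesaro x l| <=
    r + 2 * M * N%:R / k.+1%:R + 2 * M * N%:R / l.+1%:R.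
Proof.
move=> hM hr hN.
have M0 : 0 <= M := le_trans (normr_ge0 _) (hM 0%N).
rewrite cesaro_diff normrZ ger0_norm; last by rewrite invr_ge0 mulr_ge0.
set K : R := k.+1%:R; set L : R := l.+1%:R.
have K0 : 0 < K by rewrite ltr0n.
have L0 : 0 < L by rewrite ltr0n.
set g := fun (i j : nat) => r + 2 * M * (i < N)%N%:R + 2 * M * (j < N)%N%:R.
have hS : `|\sum_(i < k.+1) \sum_(j < l.+1) (x i - x j)| <=
          \sum_(i < k.+1) \sum_(j < l.+1) g i j.
  apply: le_trans (ler_norm_sum _ _ _) _; apply: ler_sum => i _.
  apply: le_trans (ler_norm_sum _ _ _) _; apply: ler_sum => j _.
  have h2M : `|x i - x j| <= M + M := le_trans (ler_normB _ _) (lerD (hM i) (hM j)).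
  rewrite /g; case: ltnP => hi; case: ltnP => hj /=; rewrite ?mulr1 ?mulr0.
  - lra.
  - lra.
  - lra.
  - have := hN _ _ hi hj; lra.
set Ck := \sum_(i < k.+1) ((i < N)%N%:R : R).
set Cl := \sum_(j < l.+1) ((j < N)%N%:R : R).
have hsum : \sum_(i < k.+1) \sum_(j < l.+1) g i j = K * L * r + 2 * M * L * Ck + 2 * M * K * Cl.
  have inner : forall i : nat, \sum_(j < l.+1) g i j =
      (r + 2 * M * (i < N)%N%:R) * L + 2 * M * Cl.
    move=> i; rewrite /g big_split /= sumr_const card_ord -mulr_sumr.
    by rewrite -[_ *+ l.+1]mulr_natr.
  under eq_bigr => i _ do rewrite inner.
  rewrite big_split /= sumr_const card_ord -mulr_suml big_split /=.
  rewrite sumr_const card_ord -mulr_sumr -/Ck.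
  rewrite -[r *+ k.+1]mulr_natr -[_ *+ k.+1]mulr_natr -/K; ring.
have Ckle : Ck <= N%:R by apply: cnt_le.
have Clle : Cl <= N%:R by apply: cnt_le.
apply: le_trans (ler_wpM2l _ hS) _; first by rewrite invr_ge0 mulr_ge0 // ltW.
rewrite hsum.
have -> : (K * L)^-1 * (K * L * r + 2 * M * L * Ck + 2 * M * K * Cl) =
   r + 2 * M * Ck / K + 2 * M * Cl / L.
  by field; rewrite ?gt_eqF.
have iK : 0 <= K^-1 by rewrite invr_ge0 ltW.
have iL : 0 <= L^-1 by rewrite invr_ge0 ltW.
apply: lerD; first apply: lerD => //.
  by apply: ler_wpM2r => //; apply: ler_wpM2l => //; lra.
by apply: ler_wpM2r => //; apply: ler_wpM2l => //; lra.
Qed.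

Theorem lemma3p4 (R : realType) (X : completeNormedModType R) (x : nat -> X)
  (hbdd : exists M : R, forall k, `|x k| <= M) :
  (cca x <= ca x)%E.
Proof.
case: hbdd => M hM.
have M0 : 0 <= M := le_trans (normr_ge0 _) (hM 0%N).
rewrite /cca {2}/ca.
apply/ereal_infP => _ [N _ <-].
set D := ereal_sup _.
have hx : forall i j, (N <= i)%N -> (N <= j)%N -> (`|x i - x j|%:E <= D)%E.
  by move=> i j hi hj; apply: ereal_sup_ubound; exists (i, j).
case E: D => [r| |]; last 2 first.
- by rewrite leey.
- by move: (hx N N (leqnn _) (leqnn _)); rewrite E leeNy_eq.
have hr : forall i j, (N <= i)%N -> (N <= j)%N -> `|x i - x j| <= r.
  by move=> i j hi hj; rewrite -lee_fin -E; apply: hx.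
have r0 : 0 <= r by have := hr N N (leqnn _) (leqnn _); rewrite subrr normr0.
apply/lee_addgt0Pr => e e0.
set m := Num.trunc (4 * M * N%:R / e).
have hm : 4 * M * N%:R / e < m.+1%:R by apply: truncnS_gt.
have hp : forall p, (m <= p)%N -> 2 * M * N%:R / p.+1%:R <= e / 2.
  move=> p hmp.
  have P0 : (0 : R) < p.+1%:R by rewrite ltr0n.
  have hmp' : (m.+1%:R : R) <= p.+1%:R by rewrite ler_nat.
  rewrite ler_pdivrMr //.
  set a := 4 * M * N%:R / e in hm.
  have ha : a * e = 4 * M * N%:R by rewrite /a mulfVK // gt_eqF.
  nra.
apply: (@le_trans _ _ (ereal_sup [set (`|Defs.cesaro x kl.1 - Defs.cesaro x kl.2|)%:E
       | kl in [set kl : nat * nat | (m <= kl.1)%N /\ (m <= kl.2)%N]])).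
  by apply: ereal_inf_lbound; exists m.
apply/ereal_supP => _ [[k l] /= [hk hl] <-].
rewrite lee_fin.
apply: le_trans (@key _ _ x M r N k l hM r0 hr) _.
by rewrite -addrA lerD2l [X in _ <= X](splitr e) lerD // hp.
Qed.
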